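(* Let $n\ge 3$ and $J=(x_n+y_n)+I_{n-2}\subseteq R$. Then $J:x_n=\mathfrak p^{+}$.
   Context: Let $\Bbbk$ be a field and $R=\Bbbk[x_1,\dots,x_n,y_1,\dots,y_n]$. For $1\le i<j\le n$ put $f_{ij}=x_iy_j-x_jy_i$ and $g_{ij}=x_ix_j-y_iy_j$. Let $\mathcal I_{K_n}=(g_{ij}\mid 1\le i<j\le n)$. Define $I_0=\mathcal I_{K_n}$ and inductively $I_k=I_{k-1}+(f_{kn})$ for $1\le k\le n-1$. Let $\mathfrak p^{+}=(x_i+y_i\mid i\in[n])$. *)

(* Defs.v *)
From HB Require Import structures.
From mathcomp Require Import all_boot all_order all_algebra.
Set Implicit Arguments. Unset Strict Implicit. Unset Printing Implicit Defensive.
Import GRing.Theory.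
Local Open Scope ring_scope.

Fixpoint mpoly (K : comNzRingType) (m : nat) : comNzRingType :=
  match m with
  | 0 => K
  | m'.+1 => {poly mpoly K m'}
  end.

(* the variable z_i of mpoly K m (for i < m); 0 if i >= m *)
Fixpoint mvar (K : comNzRingType) (m : nat) (i : nat) {struct m} : mpoly K m :=
  match m return mpoly K m with
  | 0 => 0
  | m'.+1 => if i == m' then 'X else (mvar K m' i)%:P
  end.

Definition in_ideal (A : comNzRingType) (s : seq A) (f : A) : Prop :=
  exists c : nat -> A, f = \sum_(i < size s) c i * s`_i.

Definition in_colon (A : comNzRingType) (s : seq A) (a f : A) : Prop :=
  in_ideal s (a * f).

Section Ring.
Variables (k : fieldType) (n : nat).

(* R = k[x_1..x_n, y_1..y_n]; x_i = z_{i-1}, y_i = z_{n+i-1} (1-based i) *)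
Definition R : comNzRingType := mpoly k (n + n).
Definition xv (i : nat) : R := mvar k (n + n) i.-1.
Definition yv (i : nat) : R := mvar k (n + n) (n + i.-1).

Definition fij (i j : nat) : R := xv i * yv j - xv j * yv i.
Definition gij (i j : nat) : R := xv i * xv j - yv i * yv j.

Definition IKn_gens : seq R :=
  [seq gij ij.1 ij.2 |
     ij <- [seq (i, j) | i <- iota 1 n, j <- iota 1 n] & (ij.1 < ij.2)%N].

Fixpoint I_gens (m : nat) : seq R :=
  match m with
  | 0 => IKn_gens
  | m'.+1 => I_gens m' ++ [:: fij m'.+1 n]
  end.

Definition J_gens : seq R := (xv n + yv n) :: I_gens (n - 2).

Definition pplus_gens : seq R := [seq xv i + yv i | i <- iota 1 n].

End Ring.

(* Main.v *)
Require Import Defs.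
From HB Require Import structures.
From mathcomp Require Import all_boot all_order all_algebra.
From mathcomp Require Import ring.
Set Implicit Arguments. Unset Strict Implicit. Unset Printing Implicit Defensive.
Import GRing.Theory.
Local Open Scope ring_scope.

Section Gen.
Variable K : comNzRingType.

Fixpoint cst (m : nat) : {rmorphism K -> mpoly K m} :=
  match m return {rmorphism K -> mpoly K m} with
  | 0 => (idfun : {rmorphism K -> K})
  | m'.+1 => (polyC \o cst m' : {rmorphism K -> {poly mpoly K m'}})
  end.

Lemma mpoly_ind m (P : mpoly K m -> Prop) :
  (forall a b, P a -> P b -> P (a + b)) ->
  (forall a b, P a -> P b -> P (a * b)) ->
  (forall a, P (cst m a)) ->
  (forall i, (i < m)%N -> P (mvar K m i)) -> forall h, P h.
Proof.
elim: m P => [|m IH] P hadd hmul hc hv h; first exact: (hc h).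
have P' : forall q, P q%:P.
  apply: (IH (fun q => P q%:P)) => [a b ha hb|a b ha hb|a|i hi].
  - by rewrite polyCD; apply: hadd.
  - by rewrite polyCM; apply: hmul.
  - exact: (hc a).
  - have := hv i (leq_trans hi (leqnSn m)).
    by rewrite /= (ltn_eqF hi).
have PX : forall i, P ('X^i).
  elim=> [|i IHi]; first by rewrite expr0 -polyC1; apply: P'.
  rewrite exprS; apply: hmul => //.
  by have := hv m (ltnSn m); rewrite /= eqxx.
rewrite -[h]coefK poly_def.
apply: (big_ind P) => //; first by rewrite -polyC0; apply: P'.
by move=> i _; rewrite -mul_polyC; apply: hmul.
Qed.

Variables (S : comNzRingType) (c : {rmorphism K -> S}) (sg : nat -> S).

Lemma comm_S (x y : S) : GRing.comm x y. Proof. exact: mulrC. Qed.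

Fixpoint mev (m : nat) : {rmorphism mpoly K m -> S} :=
  match m return {rmorphism mpoly K m -> S} with
  | 0 => c
  | m'.+1 => horner_morph (fun x => @comm_S (sg m') (mev m' x)) : {rmorphism _ -> _}
  end.

Lemma mev_cst m a : mev m (cst m a) = c a.
Proof. by elim: m => [|m IH] //=; rewrite horner_morphC. Qed.

Lemma mev_mvar m i : (i < m)%N -> mev m (mvar K m i) = sg i.
Proof.
elim: m => [|m IH] // hi /=.
case: eqP => [->|ne]; first by rewrite horner_morphX.
rewrite horner_morphC IH //.
by move: hi; rewrite ltnS leq_eqVlt => /orP[/eqP//|].
Qed.

Lemma mvar_neq0 m i : (i < m)%N -> mvar K m i != 0.
Proof.
elim: m => [|m IH] // hi /=.
case: (i =P m) => [_|ne]; first by rewrite polyX_eq0.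
rewrite polyC_eq0 IH //.
by move: hi; rewrite ltnS leq_eqVlt => /orP[/eqP//|].
Qed.
End Gen.

Lemma mpoly_dom (K : idomainType) m (a b : mpoly K m) : a * b = 0 -> a = 0 \/ b = 0.
Proof.
elim: m a b => [|m IH] a b /=.
  by move/eqP; rewrite mulf_eq0 => /orP[/eqP|/eqP]; auto.
move=> hab.
case: (eqVneq a 0) => [|a0]; first by left.
case: (eqVneq b 0) => [|b0]; first by right.
exfalso.
have hl : lead_coef a * lead_coef b != 0.
  apply/eqP => /IH [] /eqP; rewrite lead_coef_eq0 => /eqP h.
    by rewrite h eqxx in a0.
  by rewrite h eqxx in b0.
have := size_proper_mul hl; rewrite hab size_poly0.
move: a0 b0; rewrite -!size_poly_eq0.
by case: (size a) => // sa _; case: (size b) => // sb _; rewrite addnS.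
Qed.

Section Ideal.
Variable A : comNzRingType.
Implicit Types (s : seq A).

Lemma in_ideal0 s : in_ideal s 0.
Proof. by exists (fun _ => 0); rewrite big1 // => i _; rewrite mul0r. Qed.

Lemma in_idealD s a b : in_ideal s a -> in_ideal s b -> in_ideal s (a + b).
Proof.
move=> [c1 ->] [c2 ->]; exists (fun i => c1 i + c2 i).
by rewrite -big_split; apply: eq_bigr => i _; rewrite mulrDl.
Qed.

Lemma in_idealM s a b : in_ideal s b -> in_ideal s (a * b).
Proof.
move=> [c1 ->]; exists (fun i => a * c1 i).
by rewrite mulr_sumr; apply: eq_bigr => i _; rewrite mulrA.
Qed.

Lemma in_ideal_mem s x : x \in s -> in_ideal s x.
Proof.
move=> xs; exists (fun i => ((i == index x s)%N)%:R).
rewrite (bigD1 (Ordinal (etrans (index_mem x s) xs))) //= eqxx mul1r nth_index //.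
rewrite big1 ?addr0 // => i; rewrite -val_eqE /= => /negbTE ->.
by rewrite mul0r.
Qed.
End Ideal.

Lemma in_ideal_sum (A : comNzRingType) (s : seq A) (I : finType) (F : I -> A) :
  (forall i, in_ideal s (F i)) -> in_ideal s (\sum_i F i).
Proof.
move=> h; apply: (big_ind (in_ideal s)); [exact: in_ideal0|exact: in_idealD|by []].
Qed.

Section Spec.
Variables (k : fieldType) (n : nat).
Hypothesis hn : (3 <= n)%N.
Local Notation N := (n + n)%N.

Definition sg (i : nat) : R k n := if (i < n)%N then mvar k N i else - mvar k N (i - n).
Definition psi : {rmorphism R k n -> R k n} := mev (cst k N) sg N.

Lemma n_pos : (0 < n)%N. Proof. by apply: leq_trans hn. Qed.

Lemma psi_xv i : (i <= n)%N -> psi (xv k n i) = xv k n i.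
Proof.
move=> hi; have hi' : (i.-1 < n)%N by move: hi n_pos; case: i => //= i; case: n.
rewrite /psi /xv mev_mvar; last by apply: leq_trans hi' (leq_addr _ _).
by rewrite /sg hi'.
Qed.

Lemma psi_yv i : (i <= n)%N -> psi (yv k n i) = - xv k n i.
Proof.
move=> hi; have hi' : (i.-1 < n)%N by move: hi n_pos; case: i => //= i; case: n.
rewrite /psi /yv mev_mvar; last by rewrite ltn_add2l.
by rewrite /sg ltnNge leq_addr /= addKn.
Qed.

Lemma psi_g i j : (i <= n)%N -> (j <= n)%N -> psi (gij k n i j) = 0.
Proof.
move=> hi hj; rewrite /gij rmorphB !rmorphM /= psi_xv // psi_xv // psi_yv // psi_yv //.
by rewrite mulrNN subrr.
Qed.

Lemma psi_f i j : (i <= n)%N -> (j <= n)%N -> psi (fij k n i j) = 0.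
Proof.
move=> hi hj; rewrite /fij rmorphB !rmorphM /= psi_xv // psi_xv // psi_yv // psi_yv //.
by rewrite !mulrN opprK mulrC addrC subrr.
Qed.

Lemma IKn_mem g : g \in IKn_gens k n ->
  exists i j, [/\ (i <= n)%N, (j <= n)%N & g = gij k n i j].
Proof.
case/mapP => [[i j]]; rewrite mem_filter /= => /andP[_ /allpairsP[[a b] [ha hb /= [-> ->]]]] ->.
move: ha hb; rewrite !mem_iota !add1n !ltnS => /andP[_ ha] /andP[_ hb].
by exists a, b.
Qed.

Lemma psi_I m : (m <= n)%N -> forall g, g \in I_gens k n m -> psi g = 0.
Proof.
elim: m => [|m IH] hm g /=.
  by move/IKn_mem => [i [j [hi hj ->]]]; apply: psi_g.
rewrite mem_cat => /orP[hg|]; first by apply: IH => //; apply: ltnW.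
by rewrite inE => /eqP ->; apply: psi_f.
Qed.

Lemma psi_J g : g \in J_gens k n -> psi g = 0.
Proof.
rewrite inE => /orP[/eqP ->|]; last by apply: psi_I; apply: leq_subr.
by rewrite rmorphD /= psi_xv // psi_yv // subrr.
Qed.

Lemma psiQ h : in_ideal (pplus_gens k n) (h - psi h).
Proof.
elim/(@mpoly_ind k N): h.
- move=> a b ha hb; have -> : a + b - psi (a + b) = (a - psi a) + (b - psi b).
    by rewrite rmorphD /=; ring.
  exact: in_idealD.
- move=> a b ha hb; have -> : a * b - psi (a * b) = b * (a - psi a) + psi a * (b - psi b).
    by rewrite rmorphM /=; ring.
  by apply: in_idealD; apply: in_idealM.
- by move=> a; rewrite /psi mev_cst subrr; apply: in_ideal0.
move=> i hi; rewrite /psi mev_mvar // /sg.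
case: ifP => hin; first by rewrite subrr; apply: in_ideal0.
apply: in_ideal_mem; rewrite opprK addrC.
have -> : mvar k N (i - n) = xv k n (i - n).+1 by [].
have -> : mvar k N i = yv k n (i - n).+1 by rewrite /yv /= subnKC // leqNgt hin.
apply: map_f; rewrite mem_iota add1n ltnS ltnS /=.
by rewrite ltn_subLR // leqNgt hin.
Qed.

Lemma IKn_sub m g : g \in IKn_gens k n -> g \in I_gens k n m.
Proof. by elim: m => [//|m IH] /= hg; rewrite mem_cat IH. Qed.

Lemma pp_mem p : p \in pplus_gens k n -> in_ideal (J_gens k n) (xv k n n * p).
Proof.
case/mapP => j; rewrite mem_iota add1n ltnS => /andP[j1 jn] ->.
case: (ltngtP j n) jn => // [jlt _|-> _].
  have -> : xv k n n * (xv k n j + yv k n j) =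
            gij k n j n + yv k n j * (xv k n n + yv k n n) by rewrite /gij; ring.
  apply: in_idealD; last by apply: in_idealM; apply: in_ideal_mem; rewrite mem_head.
  apply: in_ideal_mem; rewrite inE; apply/orP; right; apply: IKn_sub.
  apply/mapP; exists (j, n) => //; rewrite mem_filter /= jlt /=.
  apply/allpairsP; exists (j, n); rewrite !mem_iota add1n !ltnS j1 (ltnW jlt) /=.
  by rewrite leqnn (leq_trans j1 (ltnW jlt)).
apply: (@in_idealM _ _ (xv k n n)); apply: in_ideal_mem; exact: mem_head.
Qed.

End Spec.

Theorem lemma3p5 (k : fieldType) (n : nat) (hn : (3 <= n)%N) (f : R k n) :
  in_colon (J_gens k n) (xv k n n) f <-> in_ideal (pplus_gens k n) f.
Proof.
split.
- move=> [c hc].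
  have h0 : psi k n (xv k n n * f) = 0.
    rewrite hc rmorph_sum big1 // => i _; by rewrite rmorphM /= (psi_J hn (mem_nth 0 (ltn_ord i))) mulr0.
  rewrite rmorphM /= psi_xv // in h0.
  have [hx|hf] := mpoly_dom h0.
    have hx0 : xv k n n != 0.
      apply: mvar_neq0; move: hn; case: (n) => //= m _.
      by rewrite addSn ltnS leq_addr.
    by rewrite hx eqxx in hx0.
  by have := psiQ f; rewrite hf subr0.
- move=> [c ->]; rewrite /in_colon mulr_sumr.
  apply: in_ideal_sum => i; rewrite mulrCA; apply: in_idealM; apply: pp_mem.
  by apply: mem_nth.
Qed.
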